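(* (a) Let $(A,\succ_A,\prec_A)$ be an anti-pre-Leibniz algebra with sub-adjacent Leibniz algebra $(A,\circ_A)$. Then $A\oplus A^*$ with $$(x+a^* )\circ_d(y+b^* )=x\circ_A y-\mathcal L^*_{\succ_A}(x)b^*+(\mathcal L^*_{\succ_A}+\mathcal R^*_{\prec_A})(y)a^*$$ is a Leibniz algebra, and the bilinear form $\omega_p(x+a^*,y+b^* )=\langle x,b^*\rangle-\langle a^*,y\rangle$ is a nondegenerate skew-symmetric $2$-cocycle on it. (b) Conversely, let $(A,\circ_A)$ be a Leibniz algebra with a representation $(l,r,A^* )$, and consider the Leibniz algebra $A\oplus A^*$ with $(x+a^* )\circ_d(y+b^* )=x\circ_A y+l(x)b^*+r(y)a^*$. If $\omega_p$ (as in (a)) is a $2$-cocycle on this Leibniz algebra, then there is a compatible anti-pre-Leibniz algebra $(A,\succ_A,\prec_A)$ of $(A,\circ_A)$ such that $l=-\mathcal L^*_{\succ_A}$ and $r=\mathcal L^*_{\succ_A}+\mathcal R^*_{\prec_A}$.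
   Context: All vector spaces are finite-dimensional over a field $\mathbb K$ of characteristic zero. For a multiplication $\ast$, $\mathcal L_\ast(x)y=x\ast y$, $\mathcal R_\ast(x)y=y\ast x$; for $f:A\to\mathrm{End}(V)$, $f^*:A\to\mathrm{End}(V^* )$ is $\langle f^*(x)u^*,v\rangle=-\langle u^*,f(x)v\rangle$. A Leibniz algebra is a vector space $A$ with a multiplication $\circ_A$ satisfying $x\circ_A(y\circ_A z)=(x\circ_A y)\circ_A z+y\circ_A(x\circ_A z)$. A representation of $(A,\circ_A)$ is a triple $(l,r,V)$ with linear maps $l,r:A\to\mathrm{End}(V)$ such that for all $x,y\in A,v\in V$: $l(x\circ_A y)v=l(x)l(y)v-l(y)l(x)v$; $r(x\circ_A y)v=l(x)r(y)v-r(y)l(x)v$; $r(y)l(x)v=-r(y)r(x)v$ (equivalently, $x\circ_A y+l(x)v+r(y)u$ defines a Leibniz algebra on $A\oplus V$). A bilinear form $\omega$ on a Leibniz algebra $(B,\circ)$ is a $2$-cocycle if $\omega(z,x\circ y)=\omega(x,y\circ z+z\circ y)-\omega(y,x\circ z)$ for all $x,y,z\in B$. An anti-pre-Leibniz algebra is a vector space $A$ with multiplications $\succ_A,\prec_A$ such that, with $x\circ y=x\succ_A y+x\prec_A y$, for all $x,y,z$: (AL1) $(x\circ y)\prec_A z=x\succ_A(y\circ z)-y\succ_A(x\circ z)$; (AL2) $(x\circ y)\succ_A z=y\succ_A(x\succ_A z)-x\succ_A(y\succ_A z)$; (AL3) $x\prec_A(y\circ z)=(y\succ_A x)\prec_A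 z-y\succ_A(x\prec_A z)$; (AL4) $(x\succ_A y)\prec_A z=-(y\prec_A x)\prec_A z$. Its sub-adjacent Leibniz algebra is $(A,\circ_A)$ with $\circ_A=\succ_A+\prec_A$; a compatible anti-pre-Leibniz algebra of a Leibniz algebra $(A,\circ_A)$ is an anti-pre-Leibniz algebra $(A,\succ_A,\prec_A)$ with $\succ_A+\prec_A=\circ_A$. *)

(* Defs.v *)
From HB Require Import structures.
From mathcomp Require Import all_boot all_order all_algebra.
Set Implicit Arguments. Unset Strict Implicit. Unset Printing Implicit Defensive.
Import GRing.Theory.
Local Open Scope ring_scope.

Definition Dual (K : fieldType) (A : vectType K) := 'Hom(A, K^o).

Definition bilinear_mul (K : fieldType) (V : lmodType K) (m : V -> V -> V) :=
  (forall z (a : K) x y, m (a *: x + y) z = a *: m x z + m y z) /\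
  (forall z (a : K) x y, m z (a *: x + y) = a *: m z x + m z y).

Definition leibniz (K : fieldType) (V : lmodType K) (m : V -> V -> V) :=
  bilinear_mul m /\ forall x y z, m x (m y z) = m (m x y) z + m y (m x z).

Definition leibniz_rep (K : fieldType) (A W : vectType K) (m : A -> A -> A)
    (l r : A -> 'End(W)) :=
  (forall (a : K) x y, l (a *: x + y) = a *: l x + l y) /\
  (forall (a : K) x y, r (a *: x + y) = a *: r x + r y) /\
  (forall x y v, l (m x y) v = l x (l y v) - l y (l x v)) /\
  (forall x y v, r (m x y) v = l x (r y v) - r y (l x v)) /\
  (forall x y v, r y (l x v) = - r y (r x v)).

(* Anti-pre-Leibniz algebra (AL1)-(AL4), with bilinear operations. *)
Definition anti_pre_leibniz (K : fieldType) (A : lmodType K) (succ prec : A -> A -> A) :=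
  let c := fun x y => succ x y + prec x y in
  bilinear_mul succ /\ bilinear_mul prec /\
  (forall x y z, prec (c x y) z = succ x (c y z) - succ y (c x z)) /\
  (forall x y z, succ (c x y) z = succ y (succ x z) - succ x (succ y z)) /\
  (forall x y z, prec x (c y z) = prec (succ y x) z - succ y (prec x z)) /\
  (forall x y z, prec (succ x y) z = - prec (prec y x) z).

(* Dual actions: <f^*(x) u*, v> = - <u*, f(x) v>.
   dualL m x = (L_m)^*(x),  dualR m x = (R_m)^*(x). *)
Definition dualL (K : fieldType) (A : vectType K) (m : A -> A -> A) (x : A)
    (u : Dual A) : Dual A := linfun (fun v : A => - u (m x v)).
Definition dualR (K : fieldType) (A : vectType K) (m : A -> A -> A) (x : A)
    (u : Dual A) : Dual A := linfun (fun v : A => - u (m v x)).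

Definition sd_mul (K : fieldType) (A : vectType K) (m : A -> A -> A)
    (l r : A -> Dual A -> Dual A) (p q : A * Dual A) : A * Dual A :=
  (m p.1 q.1, l p.1 q.2 + r q.1 p.2).

Definition omega_p (K : fieldType) (A : vectType K) (p q : A * Dual A) : K :=
  q.2 p.1 - p.2 q.1.

Definition lb_bilinear_form (K : fieldType) (V : lmodType K) (w : V -> V -> K) :=
  (forall z (a : K) x y, w (a *: x + y) z = a * w x z + w y z) /\
  (forall z (a : K) x y, w z (a *: x + y) = a * w z x + w z y).

Definition lb_skew_symmetric (K : fieldType) (V : lmodType K) (w : V -> V -> K) :=
  forall x y, w x y = - w y x.

Definition lb_nondegenerate (K : fieldType) (V : lmodType K) (w : V -> V -> K) :=
  forall x, (forall y, w x y = 0) -> x = 0.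

Definition two_cocycle (K : fieldType) (V : lmodType K) (m : V -> V -> V)
    (w : V -> V -> K) :=
  forall x y z, w z (m x y) = w x (m y z + m z y) - w y (m x z).

(* Main.v *)
Require Import Defs.
From HB Require Import structures.
From mathcomp Require Import all_boot all_order all_algebra ring.
Import GRing.Theory.
Set Implicit Arguments. Unset Strict Implicit.
Local Open Scope ring_scope.
Lemma linfunE' (K : fieldType) (A B : vectType K) (f : A -> B) :
  (forall a x y, f (a *: x + y) = a *: f x + f y) -> linfun f =1 f.
Proof.
move=> hf.
pose F : {linear A -> B} := HB.pack f (GRing.isLinear.Build _ _ _ _ f hf).
exact: (lfunE F).
Qed.

Section Dd.
Variables (K : fieldType) (A : vectType K).
Definition fco (i : 'I_(\dim (fullv : {vspace A}))) : Dual A :=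
  @linfun _ A K^o (coord (vbasis fullv) i).
Lemma fcoE i v : fco i v = coord (vbasis fullv) i v.
Proof. by rewrite /fco lfunE. Qed.
Definition dd (phi : Dual A -> K) : A :=
  \sum_i phi (fco i) *: (vbasis (fullv : {vspace A}))`_i.
Lemma dual_expand (u : Dual A) : u = \sum_(i < \dim (fullv : {vspace A})) u (vbasis fullv)`_i *: fco i.
Proof.
apply/lfunP=> v; rewrite sum_lfunE.
rewrite {1}(coord_vbasis (memvf v)) linear_sum /=.
apply: eq_bigr => i _; rewrite scale_lfunE fcoE linearZ /=.
exact: mulrC.

Qed.
Lemma ddE (phi : Dual A -> K) :
  (forall a u w, phi (a *: u + w) = a * phi u + phi w) ->
  forall u : Dual A, u (dd phi) = phi u.
Proof.
move=> hphi u; rewrite /dd linear_sum /=.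
rewrite [in RHS](dual_expand u).
have h0 : phi 0 = 0.
  have := hphi 1 0 0; rewrite scaler0 add0r mul1r => H; apply: (addrI (phi 0)); by rewrite addr0 -H.
elim/big_rec2: _ => [|i y1 y2 _ ->]; first by rewrite h0.
rewrite hphi linearZ /=.
by congr (_ + _); exact: mulrC.
Qed.
Lemma dual_sep (w1 w2 : A) : (forall u : Dual A, u w1 = u w2) -> w1 = w2.
Proof.
move=> h; rewrite (coord_vbasis (memvf w1)) (coord_vbasis (memvf w2)).
by apply: eq_bigr => i _; rewrite -!fcoE h.
Qed.
End Dd.

Section Lin.
Variables (K : fieldType) (V W : lmodType K) (f : V -> W).
Hypothesis hf : forall a x y, f (a *: x + y) = a *: f x + f y.
Lemma lin0 : f 0 = 0.
Proof.
have := hf 1 0 0; rewrite scaler0 add0r scale1r => H.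
by apply: (addrI (f 0)); rewrite addr0 -H.
Qed.
Lemma linD x y : f (x + y) = f x + f y.
Proof. by rewrite -{1}[x]scale1r hf scale1r. Qed.
Lemma linZ a x : f (a *: x) = a *: f x.
Proof. by rewrite -[a *: x]addr0 hf lin0 addr0. Qed.
Lemma linN x : f (- x) = - f x.
Proof. by rewrite -!scaleN1r linZ. Qed.
End Lin.

Lemma scaleK (K : fieldType) (a b : K^o) : a *: b = a * b.
Proof. by []. Qed.

Ltac ev := repeat first [rewrite add_lfunE | rewrite scale_lfunE | rewrite opp_lfunE | rewrite zero_lfunE]; rewrite ?scaleK.

Section SD.
Variables (K : fieldType) (A : vectType K) (m : A -> A -> A)
  (l r : A -> Dual A -> Dual A).
Hypotheses (hm : leibniz m)
  (lL : forall x a u w, l x (a *: u + w) = a *: l x u + l x w)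
  (rL : forall x a u w, r x (a *: u + w) = a *: r x u + r x w)
  (lA : forall a x y u, l (a *: x + y) u = a *: l x u + l y u)
  (rA : forall a x y u, r (a *: x + y) u = a *: r x u + r y u)
  (R1 : forall x y v, l (m x y) v = l x (l y v) - l y (l x v))
  (R2 : forall x y v, r (m x y) v = l x (r y v) - r y (l x v))
  (R3 : forall x y v, r y (l x v) = - r y (r x v)).
Lemma sd_leibniz : leibniz (sd_mul m l r).
Proof.
have [[m1 m2] mL] := hm.
split; [split|].
- move=> [z c] a [x1 a1] [x2 a2]; rewrite /sd_mul /=.
  apply: injective_projections => /=; first by rewrite m1.
  apply/lfunP => v; rewrite lA rL; ev; ring.
- move=> [z c] a [x1 a1] [x2 a2]; rewrite /sd_mul /=.
  apply: injective_projections => /=; first by rewrite m2.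
  apply/lfunP => v; rewrite lL rA; ev; ring.
move=> [x a] [y b] [z c]; rewrite /sd_mul /=.
apply: injective_projections => /=; first exact: mL.
apply/lfunP => v.
rewrite !(linD (lL _)) !(linD (rL _)) R1 !R2 !R3; ev; ring.
Qed.
End SD.

Section BilFacts.
Variables (K : fieldType) (V : lmodType K) (m : V -> V -> V).
Hypothesis hb : bilinear_mul m.
Lemma mDl x y z : m (x + y) z = m x z + m y z. Proof. exact: (linD (hb.1 z)). Qed.
Lemma mDr x y z : m z (x + y) = m z x + m z y. Proof. exact: (linD (hb.2 z)). Qed.
Lemma mNl x z : m (- x) z = - m x z. Proof. exact: (linN (hb.1 z)). Qed.
Lemma mNr x z : m z (- x) = - m z x. Proof. exact: (linN (hb.2 z)). Qed.
Lemma mZl a x z : m (a *: x) z = a *: m x z. Proof. exact: (linZ (hb.1 z)). Qed.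
Lemma mZr a x z : m z (a *: x) = a *: m z x. Proof. exact: (linZ (hb.2 z)). Qed.
Lemma m0l z : m 0 z = 0. Proof. exact: (lin0 (hb.1 z)). Qed.
Lemma m0r z : m z 0 = 0. Proof. exact: (lin0 (hb.2 z)). Qed.
End BilFacts.

Lemma dualLE (K : fieldType) (A : vectType K) (m : A -> A -> A) :
  bilinear_mul m -> forall x u v, dualL m x u v = - u (m x v).
Proof.
move=> hb x u v; rewrite /dualL linfunE' // => a p q.
by rewrite hb.2 linearD linearZ /= !scaleK; ring.
Qed.
Lemma dualRE (K : fieldType) (A : vectType K) (m : A -> A -> A) :
  bilinear_mul m -> forall x u v, dualR m x u v = - u (m v x).
Proof.
move=> hb x u v; rewrite /dualR linfunE' // => a p q.
by rewrite hb.1 linearD linearZ /= !scaleK; ring.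
Qed.

Lemma use_eq (R : comNzRingType) (a b p q : R) : a - b = p - q -> p = q -> a = b.
Proof. by move=> h hpq; apply/eqP; rewrite -subr_eq0 h hpq subrr. Qed.

Section PA.
Variables (K : fieldType) (A : vectType K) (succ prec : A -> A -> A).
Hypotheses (bs : bilinear_mul succ) (bp : bilinear_mul prec).
Definition circ x y := succ x y + prec x y.
Hypotheses
  (AL1 : forall x y z, prec (circ x y) z = succ x (circ y z) - succ y (circ x z))
  (AL2 : forall x y z, succ (circ x y) z = succ y (succ x z) - succ x (succ y z))
  (AL3 : forall x y z, prec x (circ y z) = prec (succ y x) z - succ y (prec x z))
  (AL4 : forall x y z, prec (succ x y) z = - prec (prec y x) z).

Lemma hD (u : Dual A) x y : u (x + y) = u x + u y. Proof. exact: linearD. Qed.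
Lemma hN (u : Dual A) x : u (- x) = - u x. Proof. exact: linearN. Qed.
Ltac pushu := rewrite /circ ?(mDl bs, mDr bs, mNl bs, mNr bs, mDl bp, mDr bp, mNl bp, mNr bp)
   ?(hD, hN).

Lemma circ_bil : bilinear_mul circ.
Proof.
split=> z a x y; rewrite /circ.
  by rewrite bs.1 bp.1 scalerDr addrACA.
by rewrite bs.2 bp.2 scalerDr addrACA.
Qed.

Lemma circ_leib x y z : circ x (circ y z) = circ (circ x y) z + circ y (circ x z).
Proof.
apply: dual_sep => u.
rewrite {1}/circ AL3 {1}[circ (circ x y) z]/circ AL1 AL2.
rewrite {1}[circ y (circ x z)]/circ AL3 (AL4 y x z).
have H := congr1 u (esym (AL1 x y z)); move: H; pushu => H.
pushu; apply: (use_eq _ H); ring.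
Qed.

Definition lL x (b : Dual A) : Dual A := - dualL succ x b.
Definition rR y (a : Dual A) : Dual A := dualL succ y a + dualR prec y a.

Ltac simp := repeat first [rewrite add_lfunE | rewrite scale_lfunE | rewrite opp_lfunE
  | rewrite zero_lfunE | rewrite (dualLE bs) | rewrite (dualRE bp)]; rewrite ?scaleK.

Lemma lLL x a u w : lL x (a *: u + w) = a *: lL x u + lL x w.
Proof. apply/lfunP => v; rewrite /lL; simp; ring. Qed.
Lemma rRL x a u w : rR x (a *: u + w) = a *: rR x u + rR x w.
Proof. apply/lfunP => v; rewrite /rR; simp; ring. Qed.
Lemma lLA a x y u : lL (a *: x + y) u = a *: lL x u + lL y u.
Proof. apply/lfunP => v; rewrite /lL; simp; rewrite bs.1 linearD linearZ /= scaleK; ring. Qed.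
Lemma rRA a x y u : rR (a *: x + y) u = a *: rR x u + rR y u.
Proof.
apply/lfunP => v; rewrite /rR; simp.
rewrite bs.1 bp.2 !linearD !linearZ /= !scaleK; ring.
Qed.
Lemma rep1 x y b : lL (circ x y) b = lL x (lL y b) - lL y (lL x b).
Proof. apply/lfunP => v; rewrite /lL; simp; rewrite AL2; pushu; ring. Qed.
Lemma rep2 x y b : rR (circ x y) b = lL x (rR y b) - rR y (lL x b).
Proof. apply/lfunP => v; rewrite /lL /rR; simp; rewrite AL2 AL3; pushu; ring. Qed.
Lemma rep3 x y b : rR y (lL x b) = - rR y (rR x b).
Proof. apply/lfunP => v; rewrite /lL /rR; simp; pushu; rewrite AL4; ring. Qed.
End PA.

Lemma use_eq2 (F : fieldType) (a b p q : F) : (2%:R : F) != 0 ->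
  (a - b) + (a - b) = p - q -> p = q -> a = b.
Proof.
move=> h2 e pq; apply/eqP; rewrite -subr_eq0.
move: e; rewrite pq subrr -mulr2n -mulr_natr => /eqP.
by rewrite mulf_eq0 (negbTE h2) orbF.
Qed.

Section PB.
Variables (K : fieldType) (hK : [pchar K] =i pred0) (A : vectType K) (circ : A -> A -> A) (l r : A -> 'End(Dual A)).
Hypotheses (hc : leibniz circ) (hr : leibniz_rep circ l r)
  (hco : two_cocycle (sd_mul circ (fun x b => l x b) (fun y a => r y a)) (@omega_p K A)).

Definition sB (x v : A) : A := dd (fun u : Dual A => fun_of_lfun (fun_of_lfun (l x) u) v).
Definition pB (v y : A) : A := dd (fun u : Dual A => - fun_of_lfun (fun_of_lfun (r y) u) v - fun_of_lfun (fun_of_lfun (l y) u) v).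

Lemma hD' (u : Dual A) x y : u (x + y) = u x + u y. Proof. exact: linearD. Qed.
Lemma hN' (u : Dual A) x : u (- x) = - u x. Proof. exact: linearN. Qed.
Lemma hZ' (u : Dual A) a x : u (a *: x) = a * u x. Proof. exact: linearZ. Qed.

Lemma sE (u : Dual A) x v : u (sB x v) = l x u v.
Proof.
rewrite /sB ddE // => a p q.
by rewrite linearP /=; ev.
Qed.
Lemma pE (u : Dual A) v y : u (pB v y) = - r y u v - l y u v.
Proof.
rewrite /pB ddE // => a p q.
rewrite !linearP /=; ev; ring.
Qed.

Lemma r0 : r 0 = 0.
Proof. exact: (lin0 hr.2.1). Qed.
Lemma l0 : l 0 = 0.
Proof. exact: (lin0 hr.1). Qed.

Lemma compat x y : sB x y + pB x y = circ x y.
Proof.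
apply: dual_sep => u.
have H := hco (x, 0) (y, 0) (0, u).
rewrite /omega_p /sd_mul /= in H.
rewrite r0 l0 !linear0 !zero_lfunE in H; ev; move: H; ev => H.
rewrite hD' sE pE; apply: (use_eq _ H); ring.
Qed.

Let lA := hr.1.
Let rA := hr.2.1.
Let R1 := hr.2.2.1.
Let R2 := hr.2.2.2.1.
Let R3 := hr.2.2.2.2.

Lemma bsB : bilinear_mul sB.
Proof.
split=> z a x y; apply: dual_sep => u; rewrite hD' hZ' !sE.
  rewrite lA; ev; ring.
rewrite linearP /=; ev; ring.
Qed.
Lemma bpB : bilinear_mul pB.
Proof.
split=> z a x y; apply: dual_sep => u; rewrite hD' hZ' !pE.
  rewrite !linearP /=; ev; ring.
rewrite lA rA; ev; ring.
Qed.

Ltac bsimp := repeat first [rewrite hD' | rewrite hN' | rewrite sE | rewrite pE | rewrite R1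
  | rewrite R2 | rewrite R3 | rewrite add_lfunE | rewrite opp_lfunE | rewrite scale_lfunE];
  rewrite ?scaleK.

Lemma B2 x y z : sB (sB x y + pB x y) z = sB y (sB x z) - sB x (sB y z).
Proof. rewrite compat; apply: dual_sep => u; bsimp; ring. Qed.
Lemma B3 x y z : pB x (sB y z + pB y z) = pB (sB y x) z - sB y (pB x z).
Proof. rewrite compat; apply: dual_sep => u; bsimp; ring. Qed.
Lemma B4 x y z : pB (sB x y) z = - pB (pB y x) z.
Proof. apply: dual_sep => u; bsimp; ring. Qed.
Lemma B1 x y z : pB (sB x y + pB x y) z = sB x (sB y z + pB y z) - sB y (sB x z + pB x z).
Proof.
have L := hc.2 x y z; rewrite -!compat in L.
rewrite !B3 B2 (B4 y x z) in L.
apply: dual_sep => u.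
have H := congr1 u (esym L); move: H.
rewrite ?(mDl bsB, mDr bsB, mNl bsB, mNr bsB, mDl bpB, mDr bpB, mNl bpB, mNr bpB) ?(hD', hN') => H.
rewrite ?(mDl bsB, mDr bsB, mNl bsB, mNr bsB, mDl bpB, mDr bpB, mNl bpB, mNr bpB) ?(hD', hN').
have h2 : (2%:R : K) != 0 by rewrite (pcharf0P _).1.
apply: (use_eq2 h2 _ H); ring.
Qed.
End PB.


Unset Implicit Arguments.
Theorem proposition2p16 (K : fieldType) (hK : [pchar K] =i pred0) (A : vectType K) :
  (* (a) *)
  (forall succ prec : A -> A -> A,
     anti_pre_leibniz succ prec ->
     let circ := fun x y => succ x y + prec x y in
     let md := sd_mul circ (fun x b => - dualL succ x b)
                           (fun y a => dualL succ y a + dualR prec y a) in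
     leibniz md /\ lb_bilinear_form (@omega_p K A) /\ lb_skew_symmetric (@omega_p K A) /\
     lb_nondegenerate (@omega_p K A) /\ two_cocycle md (@omega_p K A)) /\
  (* (b) *)
  (forall (circ : A -> A -> A) (l r : A -> 'End(Dual A)),
     leibniz circ -> leibniz_rep circ l r ->
     two_cocycle (sd_mul circ (fun x b => l x b) (fun y a => r y a)) (@omega_p K A) ->
     exists succ prec : A -> A -> A,
       anti_pre_leibniz succ prec /\
       (forall x y, succ x y + prec x y = circ x y) /\
       (forall x u, l x u = - dualL succ x u) /\
       (forall x u, r x u = dualL succ x u + dualR prec x u)).
Proof.
split.
- move=> succ prec hap c md.
  case: hap => bs [bp [AL1 [AL2 [AL3 AL4]]]].
  split; [|split; [|split; [|split]]].
  + have hm : leibniz (circ succ prec).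
      split; first exact: circ_bil.
      by move=> x y z; apply: circ_leib.
    have := sd_leibniz hm (lLL bs) (rRL bs bp) (lLA bs) (rRA bs bp).
    move=> /(_ (rep1 bs AL2)) /(_ (rep2 bs bp AL2 AL3)) /(_ (rep3 bs bp AL4)).
    by [].
  + split=> z a [x1 a1] [x2 a2]; rewrite /omega_p /=.
      rewrite hD' hZ'; ev; ring.
    rewrite hD' hZ'; ev; ring.
  + by move=> [x a] [y b]; rewrite /omega_p /= opprB.
  + move=> [x a] H.
    have hx : x = 0.
      apply: dual_sep => u; have := H (0, u); rewrite /omega_p /= linear0 subr0 => ->.
      by rewrite linear0.
    have ha : a = 0.
      apply/lfunP => v; have := H (v, 0); rewrite /omega_p /= hx linear0 zero_lfunE sub0r.
      by move/eqP; rewrite oppr_eq0 => /eqP ->.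
    by rewrite hx ha.
  + move=> [x a] [y b] [z cc]; rewrite /omega_p /sd_mul /=.
    repeat first [rewrite add_lfunE | rewrite opp_lfunE | rewrite scale_lfunE
      | rewrite (dualLE bs) | rewrite (dualRE bp) | rewrite hD' | rewrite hN'
      | rewrite (mDl bs) | rewrite (mDr bs) | rewrite (mDl bp) | rewrite (mDr bp)].
    ring.
- move=> c l r hc hr hco.
  exists (sB l), (pB l r).
  split; [|split; [|split]].
  + split; first exact: (bsB hr).
    split; first exact: (bpB hr).
    split; first by move=> x y z; apply: (B1 hK hc hr hco).
    split; first by move=> x y z; apply: (B2 hr hco).
    split; first by move=> x y z; apply: (B3 hr hco).
    by move=> x y z; apply: (B4 hr).
  + by move=> x y; apply: (compat hr hco).
  + move=> x u; apply/lfunP => v.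
    by rewrite opp_lfunE (dualLE (bsB hr)) opprK sE.
  + move=> x u; apply/lfunP => v.
    rewrite add_lfunE (dualLE (bsB hr)) (dualRE (bpB hr)) sE pE; ring.
Qed.
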